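(* Let $n\ge4$, $x_1,\dots,x_{n-1}>0$, $\gamma,\delta>0$ with $\gamma\ne1\ne\delta$, $x_0=1$, and let $\mathbf{P}$ be the $n\times n$ matrix with entries $p_{ij}=x_{j-1}/x_{i-1}$ except $p_{12}=\delta x_1$, $p_{21}=1/(\delta x_1)$, $p_{13}=\gamma x_2$, $p_{31}=1/(\gamma x_2)$. Let $\mathbf{w}^{EM}$ be the principal right eigenvector of $\mathbf{P}$. Then $\delta<\gamma$ iff $w_2^{EM}/w_3^{EM}>x_2/x_1$; $\delta=\gamma$ iff $w_2^{EM}/w_3^{EM}=x_2/x_1$; and $\delta>\gamma$ iff $w_2^{EM}/w_3^{EM}<x_2/x_1$.
   Context: The principal right eigenvector is the positive (Perron) eigenvector belonging to the largest eigenvalue. *)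

(* Defs.v *)
From HB Require Import structures.
From mathcomp Require Import all_boot all_order all_algebra.
From mathcomp Require Import reals.
Set Implicit Arguments. Unset Strict Implicit. Unset Printing Implicit Defensive.
Import Order.TTheory GRing.Theory Num.Theory.
Local Open Scope ring_scope.

(* Indices are 0-based: paper index i (1..n) is Rocq index i-1 (0..n-1).
   x : nat -> R with x 0 = 1 (the paper's x_0), paper x_k = x k.
   Paper p_ij = x_{j-1}/x_{i-1}  becomes  P i j = x j / x i (0-based),
   with the four perturbed entries p12, p21, p13, p31. *)
Definition PEM (R : realType) (n : nat) (x : nat -> R) (delta gamma : R)
  : 'M[R]_n :=
  \matrix_(i < n, j < n)
    if (val i == 0%N) && (val j == 1%N) then delta * x 1%N
    else if (val i == 1%N) && (val j == 0%N) then (delta * x 1%N)^-1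
    else if (val i == 0%N) && (val j == 2%N) then gamma * x 2%N
    else if (val i == 2%N) && (val j == 0%N) then (gamma * x 2%N)^-1
    else x (val j) / x (val i).

(* Principal right eigenvector: a positive (Perron) right eigenvector whose
   eigenvalue is the largest eigenvalue of the matrix.  [eigenvalue] is
   MathComp's notion (left/right spectra coincide). *)
Definition principal_right_eigenvector (R : realType) (n : nat)
  (P : 'M[R]_n) (w : 'cV[R]_n) : Prop :=
  (forall i, 0 < w i 0) /\
  exists lambda : R, P *m w = lambda *: w /\
    eigenvalue P lambda /\ (forall mu, eigenvalue P mu -> mu <= lambda).

Definition cvnth (R : realType) (n : nat) (w : 'cV[R]_n) (k : nat) : R :=
  match insub k with Some i => w i 0 | None => 0 end.

(* Main.v *)
Require Import Defs.
From HB Require Import structures.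
From mathcomp Require Import all_boot all_order all_algebra.
From mathcomp Require Import reals.
From mathcomp Require Import ring lra.
Import Order.TTheory GRing.Theory Num.Theory.
Local Open Scope ring_scope.

Theorem mainTheorem9 (R : realType) (n : nat) (x : nat -> R)
  (gamma delta : R) (w : 'cV[R]_n) :
  (4 <= n)%N ->
  x 0%N = 1 ->
  (forall k : nat, (1 <= k < n)%N -> 0 < x k) ->
  0 < gamma -> 0 < delta -> gamma != 1 -> delta != 1 ->
  principal_right_eigenvector (PEM n x delta gamma) w ->
  [/\ delta < gamma <-> cvnth w 1 / cvnth w 2 > x 2%N / x 1%N,
      delta = gamma <-> cvnth w 1 / cvnth w 2 = x 2%N / x 1%N
    & delta > gamma <-> cvnth w 1 / cvnth w 2 < x 2%N / x 1%N].
Proof.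
move=> n4 x0 xpos gp dp _ _ [wpos [l [Hev _]]].
have hx : forall k : 'I_n, 0 < x k.
  move=> k; case: (posnP k) => [->|k0]; first by rewrite x0.
  by apply: xpos; rewrite k0 ltn_ord.
have l0n : (0 < n)%N by apply: leq_trans n4.
have l1n : (1 < n)%N by apply: leq_trans n4.
have l2n : (2 < n)%N by apply: leq_trans n4.
pose i0 : 'I_n := Ordinal l0n.
pose i1 : 'I_n := Ordinal l1n.
pose i2 : 'I_n := Ordinal l2n.
set P := PEM n x delta gamma in Hev.
have Ppos : forall i j, 0 < P i j.
  { move=> i j; rewrite /P /PEM mxE.
  repeat case: ifP => _.
  all: rewrite ?invr_gt0 ?mulr_gt0 ?divr_gt0 //.
  all: first [exact: (hx (Ordinal l1n)) | exact: (hx (Ordinal l2n)) | exact: (hx j) | rewrite invr_gt0; exact: (hx i)]. }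
have E : forall i, \sum_j P i j * w j 0 = l * w i 0.
  by move=> i; have := congr1 (fun M : 'M[R]_(n,1) => M i 0) Hev; rewrite /= !mxE.
have x1 := hx i1; have x2 := hx i2.
have w0p := wpos i0; have w1p := wpos i1; have w2p := wpos i2.
have lp : 0 < l.
  have := E i0; rewrite (bigD1 i0) //= => e.
  have : 0 < l * w i0 0.
    rewrite -e; apply: ltr_wpDr.
      by apply: sumr_ge0 => j _; rewrite mulr_ge0 // ltW.
    by rewrite mulr_gt0.
  by rewrite pmulr_lgt0.
have key : forall (i : 'I_n) (c : R), (val i = 1 \/ val i = 2)%N ->
   P i i0 = c / x i ->
   x i * (l * w i 0) = c * w i0 0 + \sum_(j | j != i0) x j * w j 0.
  move=> i c vi Pc; rewrite -E (bigD1 i0) //= mulrDr Pc; congr (_ + _).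
    have : x i != 0 by rewrite gt_eqF.
    by move=> h; field.
  rewrite mulr_sumr; apply: eq_bigr => j jn.
  have vj : (val j != 0)%N by apply: contra jn => /eqP h; apply/eqP/val_inj.
  rewrite /P /PEM mxE.
  have h1 : x 1%N != 0 by rewrite gt_eqF // (hx (Ordinal l1n)).
  have h2 : x 2%N != 0 by rewrite gt_eqF // (hx (Ordinal l2n)).
  rewrite -[x i]/(x (val i)).
  by case: vi => ->; rewrite (negPf vj) /= ?andbF /=; field.
have k1 := key i1 (delta^-1) (or_introl erefl).
have k2 := key i2 (gamma^-1) (or_intror erefl).
have P1 : P i1 i0 = delta^-1 / x 1%N.
  rewrite /P /PEM mxE /=; have : x 1%N != 0 by rewrite gt_eqF.
  by move=> h; field; rewrite h gt_eqF.
have P2 : P i2 i0 = gamma^-1 / x 2%N.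
  rewrite /P /PEM mxE /=; have : x 2%N != 0 by rewrite gt_eqF.
  by move=> h; field; rewrite h gt_eqF.
move: (k1 P1) (k2 P2) => {k1 k2 key E} /= e1 e2.
have c1 : cvnth w 1 = w i1 0.
  rewrite /cvnth; case: insubP => [i _ vi|]; last by rewrite /= l1n.
  by congr (w _ 0); apply: val_inj.
have c2 : cvnth w 2 = w i2 0.
  rewrite /cvnth; case: insubP => [i _ vi|]; last by rewrite /= l2n.
  by congr (w _ 0); apply: val_inj.
rewrite c1 c2.
set S := \sum_(j | j != i0) _ in e1 e2.
set W0 := w i0 0 in w0p e1 e2; set W1 := w i1 0 in w1p e1 e2 *;
set W2 := w i2 0 in w2p e2 *.
set X1 := x 1%N in x1 e1 *; set X2 := x 2%N in x2 e2 *.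
pose K := W0 / (l * delta * gamma * X1 * W2).
have Kp : 0 < K by rewrite divr_gt0 // !mulr_gt0.
have hw1 : W1 = (l * X2 * W2 + (delta^-1 - gamma^-1) * W0) / (l * X1).
  have h : l * X1 * W1 = l * X2 * W2 + (delta^-1 - gamma^-1) * W0.
    transitivity (X1 * (l * W1)); first ring.
    rewrite e1 (_ : l * X2 * W2 = X2 * (l * W2)); last ring.
    rewrite e2; ring.
  by rewrite -h; field; rewrite !gt_eqF.
have D : W1 / W2 - X2 / X1 = (gamma - delta) * K.
  rewrite hw1 /K; field.
  by rewrite !gt_eqF.
split.
- by rewrite -[X2 / X1 < _]subr_gt0 D pmulr_lgt0 // subr_gt0.
- split => [e|h]; first by apply/eqP; rewrite -subr_eq0 D e subrr mul0r.
  have : (gamma - delta) * K == 0 by rewrite -D h subrr.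
  by rewrite mulf_eq0 (gt_eqF Kp) orbF subr_eq0 => /eqP.
- by rewrite -[W1 / W2 < _]subr_lt0 D pmulr_llt0 // subr_lt0.
Qed.
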